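(* Let $M$ and $N$ be $\lambda$-terms. If there is no $M'$ with $M \twoheadrightarrow_\beta M'$ and $\mathrm{BT}^c(M') \le \mathrm{BT}^c(N)$ (i.e. no reduct of $M$ improves $N$ globally), then $M \neq_\beta N$.
   Context: Untyped $\lambda$-calculus modulo $\alpha$. A head reduction step is a $\beta$-step $\lambda x_1\ldots x_n.(\lambda y.P)QQ_1\ldots Q_m \to \lambda x_1\ldots x_n.P[y:=Q]Q_1\ldots Q_m$ ($n,m\ge0$); a head normal form (hnf) is a term $\lambda x_1\ldots x_n.\,yQ_1\ldots Q_m$. The clocked Böhm tree $\mathrm{BT}^c(M)$ is defined coinductively: $\bot$ if $M$ has no hnf; otherwise, if the head reduction of $M$ to hnf is $M \to_h^k \lambda x_1\ldots x_n.\,yM_1\ldots M_m$ ($k$ steps), then $\mathrm{BT}^c(M)$ is $\lambda x_1\ldots x_n.\,y\,\mathrm{BT}^c(M_1)\ldots\mathrm{BT}^c(M_m)$ with its root node annotated by $k$. Positions are sequences over $\{0,1,2\}$ ($0$: body of abstraction, $1$: function part, $2$: argument of application). For annotated trees, $T_1 \le T_2$ means: $T_1,T_2$ coincide after erasing annotations, and at every position $p$ either neither subtree at $p$ has a root annotation or both do with annotations $k_1 \le k_2$. *)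

(* Defs.v *)
From Stdlib Require Import Arith List Relations ClassicalEpsilon.
Import ListNotations.

(** Terms (de Bruijn indices: alpha-equivalence is syntactic equality). *)
Inductive term : Type :=
| Var : nat -> term
| App : term -> term -> term
| Lam : term -> term.

Fixpoint lift (c : nat) (t : term) : term :=
  match t with
  | Var n => if c <=? n then Var (S n) else Var n
  | App a b => App (lift c a) (lift c b)
  | Lam a => Lam (lift (S c) a)
  end.

(** subst n u t : t[n := u], capture-avoiding; indices above n are decremented. *)
Fixpoint subst (n : nat) (u : term) (t : term) : term :=
  match t with
  | Var m => if m =? n then u else if n <? m then Var (pred m) else Var m
  | App a b => App (subst n u a) (subst n u b)
  | Lam a => Lam (subst (S n) (lift 0 u) a)
  end.

Inductive beta : term -> term -> Prop :=
| beta_redex : forall P Q, beta (App (Lam P) Q) (subst 0 Q P)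
| beta_appl : forall M M' N, beta M M' -> beta (App M N) (App M' N)
| beta_appr : forall M N N', beta N N' -> beta (App M N) (App M N')
| beta_lam : forall M M', beta M M' -> beta (Lam M) (Lam M').

Definition beta_red : term -> term -> Prop := clos_refl_trans term beta.
Definition beta_eq : term -> term -> Prop := clos_refl_sym_trans term beta.

Definition is_lam (t : term) : bool :=
  match t with Lam _ => true | _ => false end.

(** Head reduction step:
    \x1..xn.(\y.P) Q Q1..Qm  ->_h  \x1..xn. P[y:=Q] Q1..Qm. *)
Inductive hred : term -> term -> Prop :=
| hred_redex : forall P Q, hred (App (Lam P) Q) (subst 0 Q P)
| hred_app : forall M M' N, is_lam M = false -> hred M M' -> hred (App M N) (App M' N)
| hred_lam : forall M M', hred M M' -> hred (Lam M) (Lam M').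

Inductive hred_n : nat -> term -> term -> Prop :=
| hred_n_0 : forall M, hred_n 0 M M
| hred_n_S : forall k M M' M'', hred M M' -> hred_n k M' M'' -> hred_n (S k) M M''.

Inductive is_neutral : term -> Prop :=
| neutral_var : forall x, is_neutral (Var x)
| neutral_app : forall h u, is_neutral h -> is_neutral (App h u).

Inductive is_hnf : term -> Prop :=
| hnf_neutral : forall h, is_neutral h -> is_hnf h
| hnf_lam : forall h, is_hnf h -> is_hnf (Lam h).

(** Annotated (clocked) Boehm-like trees: possibly infinite lambda-trees with
    bottom, each node carrying an optional annotation. *)
CoInductive atree : Type :=
| ABot : atree
| AVar : option nat -> nat -> atree
| AApp : option nat -> atree -> atree -> atree
| ALam : option nat -> atree -> atree.

(** If M head-reduces in k steps to the hnf H, return (k, H) (unique, since head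
    reduction is deterministic); otherwise None.  Classical choice. *)
Definition hnf_data (M : term) : option (nat * term) :=
  match excluded_middle_informative
          (exists p : nat * term, hred_n (fst p) M (snd p) /\ is_hnf (snd p)) with
  | left e => Some (proj1_sig (constructive_indefinite_description _ e))
  | right _ => None
  end.

(** Traversal states: a full term whose Boehm tree is wanted, or a part of the
    spine of an already computed head normal form. *)
Inductive bt_state : Type :=
| BFull : term -> bt_state
| BSpine : term -> bt_state.

CoFixpoint bt_go (s : bt_state) : atree :=
  match s with
  | BFull M =>
      match hnf_data M with
      | None => ABot
      | Some (k, H) =>
          match H with
          | Var x => AVar (Some k) x
          | App H1 H2 => AApp (Some k) (bt_go (BSpine H1)) (bt_go (BFull H2))
          | Lam H' => ALam (Some k) (bt_go (BSpine H'))
          end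
      end
  | BSpine H =>
      match H with
      | Var x => AVar None x
      | App H1 H2 => AApp None (bt_go (BSpine H1)) (bt_go (BFull H2))
      | Lam H' => ALam None (bt_go (BSpine H'))
      end
  end.

Definition BTc (M : term) : atree := bt_go (BFull M).

(** Positions: 0 = body of abstraction, 1 = function part, 2 = argument. *)
Inductive dir : Type := D0 | D1 | D2.
Definition position := list dir.

Fixpoint subtree_at (T : atree) (p : position) : option atree :=
  match p with
  | [] => Some T
  | d :: p' =>
      match d, T with
      | D0, ALam _ t => subtree_at t p'
      | D1, AApp _ t _ => subtree_at t p'
      | D2, AApp _ _ u => subtree_at u p'
      | _, _ => None
      end
  end.

Inductive label : Type := LBot | LVar (x : nat) | LApp | LLam.

Definition root_label (T : atree) : label :=
  match T with
  | ABot => LBot | AVar _ x => LVar x | AApp _ _ _ => LApp | ALam _ _ => LLam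
  end.

Definition root_ann (T : atree) : option nat :=
  match T with
  | ABot => None | AVar a _ => a | AApp a _ _ => a | ALam a _ => a
  end.

Definition ann_le (a b : option nat) : Prop :=
  match a, b with
  | None, None => True
  | Some k1, Some k2 => k1 <= k2
  | _, _ => False
  end.

Definition tree_le (T1 T2 : atree) : Prop :=
  forall p : position,
    match subtree_at T1 p, subtree_at T2 p with
    | None, None => True
    | Some S1, Some S2 => root_label S1 = root_label S2 /\ ann_le (root_ann S1) (root_ann S2)
    | _, _ => False
    end.

(* Main.v *)
Require Import Defs.
From Stdlib Require Import Arith List Relations ClassicalEpsilon Lia Classical.
Import ListNotations.

Ltac nat_cases := repeat (cbn [lift subst pred]; match goal with
 | |- context [?a =? ?b] => destruct (Nat.eqb_spec a b)
 | |- context [?a <=? ?b] => destruct (Nat.leb_spec a b)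
 | |- context [?a <? ?b] => destruct (Nat.ltb_spec a b)
 | |- context [match ?n with 0 => _ | S _ => _ end] => destruct n
 end); try lia; try reflexivity; try (f_equal; lia).

Lemma lift_lift t : forall c d, c <= d -> lift (S d) (lift c t) = lift c (lift d t).
Proof.
  induction t; intros c d Hcd; simpl.
  - nat_cases.
  - rewrite IHt1, IHt2; auto.
  - rewrite IHt; auto; lia.
Qed.

Lemma subst_lift_cancel t : forall n u, subst n u (lift n t) = t.
Proof.
  induction t; intros m u; simpl.
  - nat_cases.
  - rewrite IHt1, IHt2; auto.
  - rewrite IHt; auto.
Qed.

Lemma lift_subst_lo t : forall c n u, c <= n ->
  lift c (subst n u t) = subst (S n) (lift c u) (lift c t).
Proof.
  induction t; intros c m u Hc; simpl.
  - nat_cases.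
  - rewrite IHt1, IHt2; auto.
  - rewrite IHt by lia. rewrite lift_lift by lia. reflexivity.
Qed.

Lemma lift_subst_hi t : forall c n u, n <= c ->
  lift c (subst n u t) = subst n (lift c u) (lift (S c) t).
Proof.
  induction t; intros c m u Hc; simpl.
  - nat_cases.
  - rewrite IHt1, IHt2; auto.
  - rewrite IHt by lia. rewrite lift_lift by lia. reflexivity.
Qed.

Lemma subst_subst t : forall i j u v, i <= j ->
  subst j u (subst i v t) = subst i (subst j u v) (subst (S j) (lift i u) t).
Proof.
  induction t; intros i j u v Hij; simpl.
  - nat_cases. rewrite subst_lift_cancel. reflexivity.
  - rewrite IHt1, IHt2; auto.
  - rewrite IHt by lia. rewrite lift_subst_lo by lia.
    rewrite lift_lift by lia. reflexivity.
Qed.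

Inductive par : term -> term -> Prop :=
| par_var x : par (Var x) (Var x)
| par_app M M' N N' : par M M' -> par N N' -> par (App M N) (App M' N')
| par_lam M M' : par M M' -> par (Lam M) (Lam M')
| par_beta P P' Q Q' : par P P' -> par Q Q' -> par (App (Lam P) Q) (subst 0 Q' P').

Lemma par_refl M : par M M.
Proof. induction M; constructor; auto. Qed.

Lemma par_lift M N : par M N -> forall c, par (lift c M) (lift c N).
Proof.
  induction 1; intros c; simpl.
  - destruct (c <=? x); constructor.
  - constructor; auto.
  - constructor; auto.
  - rewrite lift_subst_hi by lia. constructor; auto.
Qed.

Lemma par_subst M M' : par M M' -> forall n u u', par u u' -> par (subst n u M) (subst n u' M').
Proof.
  induction 1; intros n u u' Hu; simpl.
  - nat_cases; try assumption; constructor.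
  - constructor; auto.
  - constructor; apply IHpar; apply par_lift; auto.
  - rewrite subst_subst by lia. constructor; auto. apply IHpar1. apply par_lift; auto.
Qed.

Fixpoint cd (t : term) : term :=
  match t with
  | Var x => Var x
  | App (Lam P) Q => subst 0 (cd Q) (cd P)
  | App M N => App (cd M) (cd N)
  | Lam M => Lam (cd M)
  end.

Lemma par_cd M N : par M N -> par N (cd M).
Proof.
  induction 1; simpl.
  - constructor.
  - destruct M; try (constructor; auto; fail).
    inversion H; subst. simpl in IHpar1. inversion IHpar1; subst.
    constructor; auto.
  - constructor; auto.
  - apply par_subst; auto.
Qed.

Lemma red_appl M M' N : beta_red M M' -> beta_red (App M N) (App M' N).
Proof. induction 1; [constructor; constructor; auto|apply rt_refl|eapply rt_trans; eauto]. Qed.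
Lemma red_appr M N N' : beta_red N N' -> beta_red (App M N) (App M N').
Proof. induction 1; [constructor; constructor; auto|apply rt_refl|eapply rt_trans; eauto]. Qed.
Lemma red_lam M M' : beta_red M M' -> beta_red (Lam M) (Lam M').
Proof. induction 1; [constructor; constructor; auto|apply rt_refl|eapply rt_trans; eauto]. Qed.

Lemma par_red M N : par M N -> beta_red M N.
Proof.
  induction 1.
  - apply rt_refl.
  - eapply rt_trans; [apply red_appl; eauto| apply red_appr; eauto].
  - apply red_lam; auto.
  - eapply rt_trans; [apply red_appl; apply red_lam; eauto|].
    eapply rt_trans; [apply red_appr; eauto|]. apply rt_step; constructor.
Qed.

Lemma beta_par M N : beta M N -> par M N.
Proof.
  induction 1; constructor; auto using par_refl.
Qed.

Lemma strip M P : beta_red M P -> forall N, par M N -> exists Z, beta_red N Z /\ par P Z.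
Proof.
  induction 1; intros N HN.
  - exists (cd x). split. apply par_red, par_cd; auto. apply par_cd, beta_par; auto.
  - exists N; split; auto. apply rt_refl.
  - destruct (IHclos_refl_trans1 N HN) as [Z1 [H1 H2]].
    destruct (IHclos_refl_trans2 Z1 H2) as [Z2 [H3 H4]].
    exists Z2; split; auto. eapply rt_trans; eauto.
Qed.

Lemma confl M N : beta_red M N -> forall P, beta_red M P -> exists Z, beta_red N Z /\ beta_red P Z.
Proof.
  induction 1; intros P HP.
  - destruct (strip _ _ HP y (beta_par _ _ H)) as [Z [H1 H2]].
    exists Z; split; auto. apply par_red; auto.
  - exists P; split; auto. apply rt_refl.
  - destruct (IHclos_refl_trans1 P HP) as [Z1 [H1 H2]].
    destruct (IHclos_refl_trans2 Z1 H1) as [Z2 [H3 H4]].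
    exists Z2; split; auto. eapply rt_trans; eauto.
Qed.

Lemma CR M N : beta_eq M N -> exists Z, beta_red M Z /\ beta_red N Z.
Proof.
  induction 1.
  - exists y; split; [apply rt_step; auto| apply rt_refl].
  - exists x; split; apply rt_refl.
  - destruct IHclos_refl_sym_trans as [Z [H1 H2]]; eauto.
  - destruct IHclos_refl_sym_trans1 as [Z1 [H1 H2]].
    destruct IHclos_refl_sym_trans2 as [Z2 [H3 H4]].
    destruct (confl _ _ H2 _ H3) as [Z [H5 H6]].
    exists Z; split; eapply rt_trans; eauto.
Qed.

Lemma neutral_no_hred h : is_neutral h -> forall X, hred h X -> False.
Proof.
  induction 1; intros X HX; inversion HX; subst.
  - inversion H.
  - eauto.
Qed.

Lemma hnf_no_hred H : is_hnf H -> forall X, hred H X -> False.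
Proof.
  induction 1; intros X HX.
  - eapply neutral_no_hred; eauto.
  - inversion HX; subst; eauto.
Qed.

Lemma hred_det M X : hred M X -> forall Y, hred M Y -> X = Y.
Proof.
  induction 1; intros Y HY; inversion HY; subst; auto.
  - discriminate.
  - discriminate.
  - f_equal; auto.
  - f_equal; auto.
Qed.

Lemma hnf_unique k M H : hred_n k M H -> is_hnf H ->
  forall k' H', hred_n k' M H' -> is_hnf H' -> k = k' /\ H = H'.
Proof.
  induction 1; intros Hh k' H' Hr Hh'.
  - inversion Hr; subst; auto. exfalso; eapply hnf_no_hred; [exact Hh|eassumption].
  - inversion Hr; subst.
    + exfalso; eapply hnf_no_hred; [exact Hh'|eassumption].
    + assert (M' = M'0) by (eapply hred_det; eauto). subst.
      destruct (IHhred_n Hh _ _ H2 Hh'); subst; auto.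
Qed.

Lemma hred_beta M N : hred M N -> beta M N.
Proof. induction 1; constructor; auto. Qed.

Lemma hred_n_red k M N : hred_n k M N -> beta_red M N.
Proof.
  induction 1. apply rt_refl. eapply rt_trans; [apply rt_step, hred_beta; eauto| auto].
Qed.

Lemma hred_n_trans a X Y : hred_n a X Y -> forall b Z, hred_n b Y Z -> hred_n (a + b) X Z.
Proof. induction 1; intros; simpl; auto. econstructor; eauto. Qed.

Lemma hred_n_lam k P Q : hred_n k P Q -> hred_n k (Lam P) (Lam Q).
Proof. induction 1; econstructor; eauto. constructor; auto. Qed.

Lemma par_neutral h h' : par h h' -> is_neutral h -> is_neutral h'.
Proof.
  induction 1; intros Hn; inversion Hn; subst; try constructor; auto.
  inversion H2.
Qed.

Lemma par_hnf H : is_hnf H -> forall H', par H H' -> is_hnf H'.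
Proof.
  induction 1; intros H' HP.
  - constructor. eapply par_neutral; eauto.
  - inversion HP; subst. apply hnf_lam; auto.
Qed.

Lemma L_step X X1 : hred X X1 -> forall Y, par X Y ->
  par X1 Y \/ exists Y1, hred Y Y1 /\ par X1 Y1 /\ is_lam Y = is_lam X.
Proof.
  induction 1; intros Y HP.
  - inversion HP; subst.
    + inversion H1; subst. right. eexists; split; [apply hred_redex|].
      split; auto. apply par_subst; auto.
    + left. apply par_subst; auto.
  - inversion HP; subst.
    + destruct (IHhred _ H3) as [HL | [Y1 [H1 [H2 H4]]]].
      * left. constructor; auto.
      * right. exists (App Y1 N'). split; [apply hred_app; congruence|].
        split; auto. constructor; auto.
    + discriminate.
  - inversion HP; subst.
    destruct (IHhred _ H1) as [HL | [Y1 [H2 [H3 H4]]]].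
    + left; constructor; auto.
    + right. exists (Lam Y1). split; [constructor; auto|]. split; auto. constructor; auto.
Qed.

Lemma L_par k X H : hred_n k X H -> is_hnf H -> forall Y, par X Y ->
  exists k' H', k' <= k /\ hred_n k' Y H' /\ is_hnf H' /\ par H H'.
Proof.
  induction 1; intros Hh Y HP.
  - exists 0, Y. repeat split; auto. constructor. eapply par_hnf; eauto.
  - destruct (L_step _ _ H _ HP) as [HL | [Y1 [H1 [H2 H3]]]].
    + destruct (IHhred_n Hh _ HL) as [k' [H' [A [B [C D]]]]].
      exists k', H'; repeat split; auto.
    + destruct (IHhred_n Hh _ H2) as [k' [H' [A [B [C D]]]]].
      exists (S k'), H'; repeat split; auto. lia. econstructor; eauto.
Qed.

Lemma L_red B A : beta_red B A -> forall kB HB, hred_n kB B HB -> is_hnf HB ->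
  exists kA HA, kA <= kB /\ hred_n kA A HA /\ is_hnf HA /\ beta_red HB HA.
Proof.
  intros HR. apply clos_rt_rt1n in HR. induction HR; intros kB HB Hr Hh.
  - exists kB, HB; repeat split; auto. apply rt_refl.
  - destruct (L_par _ _ _ Hr Hh y (beta_par _ _ H)) as [k' [H' [A [B [C D]]]]].
    destruct (IHHR _ _ B C) as [k2 [H2 [A2 [B2 [C2 D2]]]]].
    exists k2, H2; repeat split; auto. lia. eapply rt_trans; [apply par_red; eauto| auto].
Qed.

(* standardization via weak head reduction *)
Inductive w : term -> term -> Prop :=
| w_redex P Q : w (App (Lam P) Q) (subst 0 Q P)
| w_app M M' N : w M M' -> w (App M N) (App M' N).

Inductive ws : term -> term -> Prop :=
| ws_refl M : ws M M
| ws_step M M' M'' : w M M' -> ws M' M'' -> ws M M''.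

Lemma ws_trans X Y : ws X Y -> forall Z, ws Y Z -> ws X Z.
Proof. induction 1; intros; auto. econstructor; eauto. Qed.

Lemma ws_app M M' N : ws M M' -> ws (App M N) (App M' N).
Proof. induction 1. constructor. econstructor; [apply w_app; eauto| auto]. Qed.

Lemma w_lift M M' : w M M' -> forall c, w (lift c M) (lift c M').
Proof.
  induction 1; intros c; simpl.
  - rewrite lift_subst_hi by lia. constructor.
  - constructor; auto.
Qed.

Lemma w_subst M M' : w M M' -> forall n u, w (subst n u M) (subst n u M').
Proof.
  induction 1; intros n u; simpl.
  - rewrite subst_subst by lia. constructor.
  - constructor; auto.
Qed.

Lemma ws_lift M M' : ws M M' -> forall c, ws (lift c M) (lift c M').
Proof. induction 1; intros c. constructor. econstructor; [apply w_lift; eauto| auto]. Qed.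

Lemma ws_subst M M' : ws M M' -> forall n u, ws (subst n u M) (subst n u M').
Proof. induction 1; intros n u. constructor. econstructor; [apply w_subst; eauto| auto]. Qed.

Inductive st : term -> term -> Prop :=
| st_var M x : ws M (Var x) -> st M (Var x)
| st_app M A B A' B' : ws M (App A B) -> st A A' -> st B B' -> st M (App A' B')
| st_lam M P P' : ws M (Lam P) -> st P P' -> st M (Lam P').

Lemma st_ws M M1 N : ws M M1 -> st M1 N -> st M N.
Proof.
  intros H1 H2; inversion H2; subst.
  - constructor; eapply ws_trans; eauto.
  - econstructor; eauto. eapply ws_trans; eauto.
  - econstructor; eauto. eapply ws_trans; eauto.
Qed.

Lemma st_refl M : st M M.
Proof. induction M; econstructor; eauto; constructor. Qed.

Lemma st_lift M N : st M N -> forall c, st (lift c M) (lift c N).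
Proof.
  induction 1; intros c; simpl.
  - pose proof (ws_lift _ _ H c) as H'. simpl in H'.
    destruct (c <=? x); constructor; auto.
  - econstructor; eauto. apply (ws_lift _ _ H c).
  - econstructor; eauto. apply (ws_lift _ _ H c).
Qed.

Lemma st_subst M M' : st M M' -> forall n u u', st u u' -> st (subst n u M) (subst n u' M').
Proof.
  induction 1; intros n u u' Hu; simpl.
  - pose proof (ws_subst _ _ H n u) as H'. simpl in H'.
    destruct (x =? n); [eapply st_ws; eauto|].
    destruct (n <? x); constructor; auto.
  - econstructor; eauto. apply (ws_subst _ _ H n u).
  - econstructor. apply (ws_subst _ _ H n u). apply IHst. apply st_lift; auto.
Qed.

Lemma st_beta N N' : beta N N' -> forall M, st M N -> st M N'.
Proof.
  induction 1; intros X HS.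
  - inversion HS as [| ? A B ? ? Hw HA HB|]; subst. inversion HA as [| |? P0 ? Hw2 HP]; subst.
    eapply st_ws; [eapply ws_trans; [exact Hw|]|].
    + eapply ws_trans; [apply ws_app; exact Hw2|]. econstructor; [apply w_redex| constructor].
    + apply st_subst; auto.
  - inversion HS; subst. econstructor; eauto.
  - inversion HS; subst. econstructor; eauto.
  - inversion HS; subst. econstructor; eauto.
Qed.

Lemma st_red M N : beta_red M N -> st M N.
Proof.
  intros H. apply clos_rt_rt1n in H.
  assert (forall X, st X M -> st X N) as G.
  { induction H; intros X HX; auto. apply IHclos_refl_trans_1n. eapply st_beta; eauto. }
  apply G, st_refl.
Qed.

Lemma st_neutral M h : st M h -> is_neutral h -> exists n, is_neutral n /\ ws M n.
Proof.
  induction 1; intros Hn.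
  - exists (Var x); split; auto; constructor.
  - inversion Hn; subst. destruct (IHst1 H3) as [n [Hn1 Hw]].
    exists (App n B); split; [constructor; auto|].
    eapply ws_trans; eauto. apply ws_app; auto.
  - inversion Hn.
Qed.

Lemma w_not_lam M M' : w M M' -> is_lam M = false.
Proof. destruct 1; reflexivity. Qed.

Lemma w_hred M M' : w M M' -> hred M M'.
Proof. induction 1; constructor; auto. eapply w_not_lam; eauto. Qed.

Lemma ws_hred M N : ws M N -> exists k, hred_n k M N.
Proof.
  induction 1. exists 0; constructor.
  destruct IHws as [k Hk]. exists (S k); econstructor; eauto. apply w_hred; auto.
Qed.

Lemma st_hnf M H : st M H -> is_hnf H -> exists k H', hred_n k M H' /\ is_hnf H'.
Proof.
  intros HS Hh. revert Hh. induction HS; intros Hh.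
  - destruct (ws_hred _ _ H) as [k Hk]. exists k, (Var x); split; auto; repeat constructor.
  - inversion Hh; subst.
    destruct (st_neutral _ _ (st_app _ _ _ _ _ H HS1 HS2) H0) as [n [Hn Hw]].
    destruct (ws_hred _ _ Hw) as [k Hk]. exists k, n; split; auto. constructor; auto.
  - inversion Hh; subst. inversion H0.
    destruct (IHHS H1) as [k [H' [Hr Hh']]].
    destruct (ws_hred _ _ H) as [k0 Hk0].
    exists (k0 + k), (Lam H'). split.
    + eapply hred_n_trans; eauto. apply hred_n_lam; auto.
    + apply hnf_lam; auto.
Qed.

Lemma hnf_data_some M k H : hred_n k M H -> is_hnf H -> hnf_data M = Some (k, H).
Proof.
  intros Hr Hh. unfold hnf_data.
  destruct excluded_middle_informative as [e|n].
  - destruct (constructive_indefinite_description _ e) as [[k' H'] [Hr' Hh']]; simpl in *.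
    destruct (hnf_unique _ _ _ Hr Hh _ _ Hr' Hh'); subst; reflexivity.
  - exfalso; apply n; exists (k, H); auto.
Qed.

Lemma hnf_data_none M : ~ (exists k H, hred_n k M H /\ is_hnf H) -> hnf_data M = None.
Proof.
  intros Hn. unfold hnf_data.
  destruct excluded_middle_informative as [e|n]; auto.
  exfalso; apply Hn. destruct e as [[k H] [A B]]; eauto.
Qed.

Lemma hnf_rel A B : beta_red B A ->
  (hnf_data B = None /\ hnf_data A = None) \/
  exists kA HA kB HB, hnf_data A = Some (kA, HA) /\ hnf_data B = Some (kB, HB) /\
     kA <= kB /\ is_hnf HB /\ beta_red HB HA.
Proof.
  intros HR.
  destruct (classic (exists k H, hred_n k B H /\ is_hnf H)) as [[kB [HB [Hr Hh]]]|Hn].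
  - right. destruct (L_red _ _ HR _ _ Hr Hh) as [kA [HA [X [Y [Z W]]]]].
    exists kA, HA, kB, HB. repeat split; auto; apply hnf_data_some; auto.
  - left. split; apply hnf_data_none; auto.
    intros [k [H [Hr Hh]]]. apply Hn.
    apply (st_hnf B H); auto. apply st_red. eapply rt_trans; eauto. eapply hred_n_red; eauto.
Qed.

Definition atree_out (t : atree) : atree :=
  match t with
  | ABot => ABot | AVar a x => AVar a x | AApp a l r => AApp a l r | ALam a b => ALam a b
  end.
Lemma atree_out_eq t : t = atree_out t.
Proof. destruct t; reflexivity. Qed.

Lemma bt_spine_eq H : bt_go (BSpine H) =
  match H with
  | Var x => AVar None x
  | App H1 H2 => AApp None (bt_go (BSpine H1)) (bt_go (BFull H2))
  | Lam H' => ALam None (bt_go (BSpine H'))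
  end.
Proof. rewrite (atree_out_eq (bt_go (BSpine H))). destruct H; reflexivity. Qed.

Lemma bt_full_eq M : bt_go (BFull M) =
  match hnf_data M with
  | None => ABot
  | Some (k, H) =>
    match H with
    | Var x => AVar (Some k) x
    | App H1 H2 => AApp (Some k) (bt_go (BSpine H1)) (bt_go (BFull H2))
    | Lam H' => ALam (Some k) (bt_go (BSpine H'))
    end
  end.
Proof.
  rewrite (atree_out_eq (bt_go (BFull M))). simpl.
  destruct (hnf_data M) as [[k H]|]; [destruct H|]; reflexivity.
Qed.

Definition cmp (o1 o2 : option atree) : Prop :=
  match o1, o2 with
  | None, None => True
  | Some S1, Some S2 => root_label S1 = root_label S2 /\ ann_le (root_ann S1) (root_ann S2)
  | _, _ => False
  end.

Lemma red_var x Y : beta_red (Var x) Y -> Y = Var x.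
Proof.
  intros H; apply clos_rt_rt1n in H. remember (Var x) as X. induction H; auto.
  subst. inversion H.
Qed.

Lemma red_lam0 h Y : beta_red (Lam h) Y -> exists h', Y = Lam h' /\ beta_red h h'.
Proof.
  intros H; apply clos_rt_rt1n in H. remember (Lam h) as X. revert h HeqX.
  induction H; intros h0 E; subst.
  - exists h0; split; auto. apply rt_refl.
  - inversion H; subst. destruct (IHclos_refl_trans_1n _ eq_refl) as [h' [E R]].
    exists h'; split; auto. eapply rt_trans; [apply rt_step; eauto| auto].
Qed.

Lemma beta_neutral h h' : beta h h' -> is_neutral h -> is_neutral h'.
Proof.
  induction 1; intros Hn; inversion Hn; subst; try (constructor; auto; fail);
  match goal with H : is_neutral (Lam _) |- _ => inversion H end.
Qed.

Lemma red_app_neu h u Y : beta_red (App h u) Y -> is_neutral h ->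
  exists h' u', Y = App h' u' /\ beta_red h h' /\ beta_red u u'.
Proof.
  intros H; apply clos_rt_rt1n in H. remember (App h u) as X. revert h u HeqX.
  induction H; intros h0 u0 E Hn; subst.
  - exists h0, u0; repeat split; apply rt_refl.
  - inversion H; subst.
    + inversion Hn.
    + destruct (IHclos_refl_trans_1n _ _ eq_refl (beta_neutral _ _ H4 Hn)) as [h' [u' [E [R1 R2]]]].
      exists h', u'; repeat split; auto. eapply rt_trans; [apply rt_step; eauto| auto].
    + destruct (IHclos_refl_trans_1n _ _ eq_refl Hn) as [h' [u' [E [R1 R2]]]].
      exists h', u'; repeat split; auto. eapply rt_trans; [apply rt_step; eauto| auto].
Qed.

Lemma red_shape HB HA : beta_red HB HA -> is_hnf HB ->
  (exists x, HB = Var x /\ HA = Var x) \/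
  (exists h u h' u', HB = App h u /\ HA = App h' u' /\ is_neutral h /\ beta_red h h' /\ beta_red u u') \/
  (exists h h', HB = Lam h /\ HA = Lam h' /\ is_hnf h /\ beta_red h h').
Proof.
  intros HR Hh. destruct Hh as [h Hn|h Hh].
  - destruct Hn as [x|h u Hn].
    + left; exists x; split; auto. apply red_var; auto.
    + right; left. destruct (red_app_neu _ _ _ HR Hn) as [h' [u' [E [R1 R2]]]].
      exists h, u, h', u'; auto.
  - right; right. destruct (red_lam0 _ _ HR) as [h' [E R]]. exists h, h'; auto.
Qed.

Lemma full_spine_sub M k H d p : hnf_data M = Some (k, H) ->
  subtree_at (bt_go (BFull M)) (d :: p) = subtree_at (bt_go (BSpine H)) (d :: p).
Proof.
  intros E. rewrite bt_full_eq, bt_spine_eq, E. destruct H, d; reflexivity.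
Qed.

Lemma pos_main p :
  (forall A B, beta_red B A -> cmp (subtree_at (bt_go (BFull A)) p) (subtree_at (bt_go (BFull B)) p)) /\
  (forall HA HB, is_hnf HB -> beta_red HB HA ->
      cmp (subtree_at (bt_go (BSpine HA)) p) (subtree_at (bt_go (BSpine HB)) p)).
Proof.
  induction p as [|d p IH].
  - split.
    + intros A B HR. destruct (hnf_rel _ _ HR) as [[E1 E2]|[kA [HA [kB [HB [E1 [E2 [Hk [Hh Hr]]]]]]]]].
      * rewrite !bt_full_eq, E1, E2. simpl. auto.
      * rewrite !bt_full_eq, E1, E2.
        destruct (red_shape _ _ Hr Hh) as [[x [-> ->]]|[[h [u [h' [u' [-> [-> _]]]]]]|[h [h' [-> [-> _]]]]]];
          simpl; auto.
    + intros HA HB Hh Hr. rewrite !bt_spine_eq.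
      destruct (red_shape _ _ Hr Hh) as [[x [-> ->]]|[[h [u [h' [u' [-> [-> _]]]]]]|[h [h' [-> [-> _]]]]]];
        simpl; auto.
  - destruct IH as [IHF IHS].
    assert (SP : forall HA HB, is_hnf HB -> beta_red HB HA ->
      cmp (subtree_at (bt_go (BSpine HA)) (d :: p)) (subtree_at (bt_go (BSpine HB)) (d :: p))).
    { intros HA HB Hh Hr. rewrite !bt_spine_eq.
      destruct (red_shape _ _ Hr Hh) as [[x [-> ->]]|[[h [u [h' [u' [-> [-> [Hn [R1 R2]]]]]]]]|[h [h' [-> [-> [Hh' R]]]]]]];
        destruct d; simpl; auto.
      - apply IHS; auto. constructor; auto. }
    split; auto.
    intros A B HR. destruct (hnf_rel _ _ HR) as [[E1 E2]|[kA [HA [kB [HB [E1 [E2 [Hk [Hh Hr]]]]]]]]].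
    + rewrite !bt_full_eq, E1, E2. simpl. destruct d; simpl; auto.
    + rewrite (full_spine_sub _ _ _ _ _ E1), (full_spine_sub _ _ _ _ _ E2). auto.
Qed.

Theorem theorem4p6 (M N : term) :
  ~ (exists M' : term, beta_red M M' /\ tree_le (BTc M') (BTc N)) ->
  ~ beta_eq M N.
Proof.
  intros Hno Heq. destruct (CR _ _ Heq) as [Z [H1 H2]].
  apply Hno. exists Z. split; auto.
  intros p. exact (proj1 (pos_main p) Z N H2).
Qed.
Print Assumptions theorem4p6.
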